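(* Let $(X,c)$ be a finite metric space, let $k\ge 1$, let $M\subseteq X$ with $|M| = k$, and let $R\subseteq X$ with $|R| = j > k$. Then $$\min_{r\in R}\ \mathrm{cost}(R\setminus\{r\}) - \mathrm{cost}(R) \;\le\; \frac{2}{j-k}\,\mathrm{cost}(M).$$ In particular, if $R_j$ and $R_{j-1}$ are consecutive sets produced by the Reverse Greedy algorithm, with $j>k$, then $\mathrm{cost}(R_{j-1})-\mathrm{cost}(R_j) \le \frac{2}{j-k}\,\mathrm{cost}(M)$.
   Context: For $x\in X$ and nonempty $F\subseteq X$, $c_{xF}=\min_{f\in F}c_{xf}$, and $\mathrm{cost}(F)=\sum_{x\in X} c_{xF}$. The Reverse Greedy algorithm on an $n$-point space $X$: set $R_n = X$; for $t = n, n-1,\dots,2$, set $R_{t-1} = R_t\setminus\{r_t\}$ where $r_t\in R_t$ is chosen (ties broken arbitrarily) to minimize $\mathrm{cost}(R_{t-1})$. *)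

(* Defs.v *)
From mathcomp Require Import all_boot all_order all_algebra.
Set Implicit Arguments. Unset Strict Implicit. Unset Printing Implicit Defensive.
Import Order.TTheory GRing.Theory Num.Theory.
Local Open Scope ring_scope.

Definition is_metric (R : realFieldType) (X : finType) (c : X -> X -> R) :=
  [/\ forall x y, 0 <= c x y,
      forall x y, c x y = 0 <-> x = y,
      forall x y, c x y = c y x &
      forall x y z, c x z <= c x y + c y z].

(* Upper bound on all distances; used only as the neutral element of the
   min below, which is only ever applied to nonempty F. *)
Definition cbound (R : realFieldType) (X : finType) (c : X -> X -> R) : R :=
  \sum_(y : X) \sum_(z : X) `|c y z|.

Definition cdist (R : realFieldType) (X : finType) (c : X -> X -> R)
  (x : X) (F : {set X}) : R :=
  \big[Num.min/cbound c]_(f in F) c x f.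

Definition cost (R : realFieldType) (X : finType) (c : X -> X -> R)
  (F : {set X}) : R :=
  \sum_(x : X) cdist c x F.

Definition rg_step (R : realFieldType) (X : finType) (c : X -> X -> R)
  (Rj Rj1 : {set X}) : Prop :=
  exists2 r, r \in Rj &
    Rj1 = Rj :\ r /\ forall r', r' \in Rj -> cost c (Rj :\ r) <= cost c (Rj :\ r').

(* Main.v *)
Require Import Defs.
From mathcomp Require Import all_boot all_order all_algebra.
From mathcomp Require Import zify ring lra.
Import Order.TTheory GRing.Theory Num.Theory.
Local Open Scope ring_scope.

Section Helpers.
Variables (R : realFieldType) (X : finType) (c : X -> X -> R).
Hypothesis hc : is_metric c.

Lemma c_ge0 x y : 0 <= c x y. Proof. by case: hc. Qed.
Lemma c_sym x y : c x y = c y x. Proof. by case: hc. Qed.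
Lemma c_tri x y z : c x z <= c x y + c y z. Proof. by case: hc. Qed.

Lemma c_bound x y : c x y <= cbound c.
Proof.
rewrite /cbound (bigD1 x) //= (bigD1 y) //=.
apply: (le_trans (ler_norm _)).
rewrite -addrA lerDl addr_ge0 //; apply: sumr_ge0 => i _ //.
by apply: sumr_ge0 => z _.
Qed.

Lemma cdist_le x (F : {set X}) f : f \in F -> cdist c x F <= c x f.
Proof. by move=> Hf; rewrite /cdist; apply: bigmin_le_cond. Qed.

Lemma cdist_arg x (F : {set X}) : F != set0 ->
  exists f, (f \in F) && (cdist c x F == c x f).
Proof.
case/set0Pn => f0 Hf0.
exists [arg min_(i < f0 in F) c x i]%O.
rewrite /cdist (bigmin_eq_arg _ f0 (fun i => i \in F) _ Hf0); last by move=> i _; apply: c_bound.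
case: arg_minP => // i Hi _; by rewrite Hi eqxx.
Qed.

Lemma cdist_ge0 x (F : {set X}) : F != set0 -> 0 <= cdist c x F.
Proof. by move/(cdist_arg x)=> [f /andP[_ /eqP ->]]; apply: c_ge0. Qed.

Lemma cdist_mono x (F G : {set X}) : F \subset G -> F != set0 ->
  cdist c x G <= cdist c x F.
Proof.
move=> sFG /(cdist_arg x) [f /andP[Hf /eqP ->]].
by apply: cdist_le; apply: (subsetP sFG).
Qed.

End Helpers.

Theorem mainTheorem3 (R : realFieldType) (X : finType) (c : X -> X -> R)
  (hc : is_metric c) (k j : nat) (M Rs : {set X})
  (hk : (1 <= k)%N) (hM : #|M| = k) (hR : #|Rs| = j) (hjk : (k < j)%N) :
  (exists2 r, r \in Rs &
     cost c (Rs :\ r) - cost c Rs <= 2 / (j - k)%:R * cost c M)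
  /\ (forall Rs1 : {set X}, rg_step c Rs Rs1 ->
        cost c Rs1 - cost c Rs <= 2 / (j - k)%:R * cost c M).
Proof.
have Mn : M != set0 by rewrite -card_gt0 hM.
have Rn : Rs != set0 by rewrite -card_gt0 hR; lia.
have Rrn : forall r, Rs :\ r != set0.
  move=> r; rewrite -card_gt0; have := cardsD1 r Rs; rewrite hR.
  case: (r \in Rs) => /=; lia.
pose mu x := xchoose (@cdist_arg _ _ c x _ Mn).
pose phi x := xchoose (@cdist_arg _ _ c x _ Rn).
have muP : forall x, (mu x \in M) && (cdist c x M == c x (mu x)).
  by move=> x; apply: (xchooseP (@cdist_arg _ _ c x _ Mn)).
have phiP : forall x, (phi x \in Rs) && (cdist c x Rs == c x (phi x)).
  by move=> x; apply: (xchooseP (@cdist_arg _ _ c x _ Rn)).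
pose Phi := phi @: M.
pose S := Rs :\: Phi.
have cardS : (j - k <= #|S|)%N.
  rewrite cardsD hR.
  have : (#|Rs :&: Phi| <= #|Phi|)%N by apply: subset_leq_card; apply: subsetIr.
  have : (#|Phi| <= #|M|)%N by apply: leq_imset_card.
  lia.
have key : forall r, r \in S -> forall x,
    cdist c x (Rs :\ r) - cdist c x Rs <= (phi x == r)%:R * (2 * cdist c x M).
  move=> r HrS x.
  have [HrR HrP] : r \in Rs /\ r \notin Phi.
    by move: HrS; rewrite inE => /andP[].
  have /andP[Hpx /eqP Epx] := phiP x.
  have /andP[Hmx /eqP Emx] := muP x.
  case: eqP => [Er|Ner].
  - rewrite mul1r Epx Er.
    have /andP[Hpm /eqP Epm] := phiP (mu x).
    have Hne : phi (mu x) != r.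
      apply/eqP => E; move: HrP; rewrite -E.
      by rewrite (imset_f phi Hmx).
    have Hin : phi (mu x) \in Rs :\ r by rewrite !inE Hne Hpm.
    apply: (le_trans (lerB (@cdist_le _ _ c x _ _ Hin) (lexx _))).
    rewrite lerBlDr.
    apply: (le_trans (@c_tri _ _ c hc x (mu x) _)).
    have h1 : c (mu x) (phi (mu x)) <= c (mu x) r by rewrite -Epm; apply: cdist_le.
    have h2 : c (mu x) r <= c (mu x) x + c x r := @c_tri _ _ c hc _ _ _.
    rewrite (@c_sym _ _ c hc (mu x) x) in h2.
    rewrite Emx; lra.
  - rewrite mul0r subr_le0 Epx; apply: cdist_le.
    by rewrite !inE Hpx andbT; apply/eqP => E; apply: Ner.
have sumle : \sum_(r in S) (cost c (Rs :\ r) - cost c Rs) <= 2 * cost c M.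
  apply: (@le_trans _ _ (\sum_(r in S) \sum_x (phi x == r)%:R * (2 * cdist c x M))).
    apply: ler_sum => r Hr; rewrite /cost -sumrB; apply: ler_sum => x _.
    exact: key.
  rewrite exchange_big /cost mulr_sumr; apply: ler_sum => x _.
  rewrite -mulr_suml.
  have h0 : 0 <= 2 * cdist c x M by rewrite mulr_ge0 // cdist_ge0.
  apply: ler_piMl => //.
  case: (boolP (phi x \in S)) => Hx.
  - rewrite (bigD1 (phi x)) //= eqxx big1 ?addr0 //.
    by move=> i /andP[_ /negbTE]; rewrite eq_sym => ->.
  - rewrite big1 // => i Hi; case: eqP => // E.
    by move: Hx; rewrite E Hi.
have Sn : (0 < #|S|)%N by lia.
case/card_gt0P: Sn => r0 Hr0.
pose r := [arg min_(i < r0 in S) cost c (Rs :\ i)]%O.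
have [HrS Hmin] : r \in S /\ forall i, i \in S -> cost c (Rs :\ r) <= cost c (Rs :\ i).
  by rewrite /r; case: arg_minP.
have HrR : r \in Rs by move: HrS; rewrite inE => /andP[].
have mge0 : 0 <= cost c (Rs :\ r) - cost c Rs.
  rewrite subr_ge0 /cost; apply: ler_sum => y _; apply: cdist_mono => //.
  exact: subsetDl.
have part1 : cost c (Rs :\ r) - cost c Rs <= 2 / (j - k)%:R * cost c M.
  have hpos : (0 : R) < (j - k)%:R by rewrite ltr0n subn_gt0.
  rewrite mulrAC ler_pdivlMr //.
  apply: (le_trans _ sumle).
  apply: (@le_trans _ _ ((cost c (Rs :\ r) - cost c Rs) *+ #|S|)).
    rewrite -[_ *+ #|S|]mulr_natr; apply: ler_wpM2l => //; by rewrite ler_nat.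
  rewrite -sumr_const; apply: ler_sum => i Hi; rewrite lerD2r; exact: Hmin.
split; first by exists r.
move=> Rs1 [r1 Hr1 [-> Hle]].
apply: le_trans part1; rewrite lerD2r; exact: Hle.
Qed.
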